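(* Fix an integer $C\ge 2$. There exists $\rho_0>0$ (depending only on $C$; e.g. $\rho_0=3$ suffices) such that for every $\rho\ge\rho_0$ and all $h_L\in[0,1]$, $h_S\in[0,1]$, $h_F\in(-1,1)$, $$\frac{\partial \mathcal{J}_h^{\mathcal{G}}}{\partial h_S}\ge 0 .$$
   Context: Setting: $C\ge 2$ is the number of classes, $h_L\in[0,1]$ (label homophily), $h_S\in[0,1]$ (structural homophily), $h_F\in(-1,1)$ (feature homophily), and $\rho>0$ a real parameter (the spectral radius of the adjacency matrix). Define $$p_0=\frac{h_LC-1}{C-1},\qquad p_1=\frac{1-h_L}{C-1},\qquad \omega=\frac{h_F}{\rho},\qquad Q=C\,p_1^2+\frac{C(1-h_S)^2}{C-1}+p_0^2\ (>0),$$ $$\mathcal{J}_h^{\neg\mathcal{G}}=\frac{1-\omega^2 Q}{(1-\omega p_0)^2},\qquad \mathcal{J}_h^{\mathcal{G}}=\frac{p_0^2}{Q}\,\mathcal{J}_h^{\neg\mathcal{G}}.$$ Partial derivatives are taken with $C$ and $\rho$ held fixed. *)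

(* Defs.v *)
From Stdlib Require Import Reals.
From Coquelicot Require Import Coquelicot.
Open Scope R_scope.

Definition p0 (C : nat) (hL : R) : R := (hL * INR C - 1) / (INR C - 1).
Definition p1 (C : nat) (hL : R) : R := (1 - hL) / (INR C - 1).
Definition omega (rho hF : R) : R := hF / rho.
Definition Qf (C : nat) (hL hS : R) : R :=
  INR C * (p1 C hL)^2 + INR C * (1 - hS)^2 / (INR C - 1) + (p0 C hL)^2.

Definition J_notG (C : nat) (rho hL hS hF : R) : R :=
  (1 - (omega rho hF)^2 * Qf C hL hS) / (1 - omega rho hF * p0 C hL)^2.

Definition J_G (C : nat) (rho hL hS hF : R) : R :=
  (p0 C hL)^2 / Qf C hL hS * J_notG C rho hL hS hF.

(* Main.v *)
Require Import Defs.
From Stdlib Require Import Reals Lra Psatz.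
From Coquelicot Require Import Coquelicot.
Open Scope R_scope.

Theorem theorem2p2 (C : nat) (HC : (2 <= C)%nat) :
  exists rho0 : R, 0 < rho0 /\
    forall rho hL hS hF : R,
      rho0 <= rho ->
      0 <= hL <= 1 -> 0 <= hS <= 1 -> -1 < hF < 1 ->
      ex_derive (fun s => J_G C rho hL s hF) hS /\
      0 <= Derive (fun s => J_G C rho hL s hF) hS.
Proof.
  exists 1; split; [lra|].
  intros rho hL hS hF Hr HL HS HF.
  assert (Hc : 2 <= INR C) by (replace 2 with (INR 2) by (simpl; lra); apply le_INR; exact HC).
  set (c := INR C) in *.
  assert (Hc1 : c - 1 <> 0) by lra.
  set (a := p0 C hL). set (b := p1 C hL). set (w := omega rho hF).
  assert (Ha : a = 1 - c * b) by (unfold a, b, p0, p1; fold c; field; lra).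
  assert (Hb0 : 0 <= b) by (unfold b, p1; fold c; apply Rmult_le_pos; [lra| left; apply Rinv_0_lt_compat; lra]).
  assert (Hb1 : b * (c - 1) <= 1) by (unfold b, p1; fold c; field_simplify; lra).
  assert (Hapos : 0 < c * b^2 + a^2).
  { destruct (Req_dec b 0) as [E|E].
    - rewrite Ha, E; nra.
    - assert (0 < b) by lra. nra. }
  assert (Hw : -1 < w < 1).
  { unfold w, omega. split.
    - apply (Rmult_lt_reg_r rho); [lra|]. field_simplify; nra.
    - apply (Rmult_lt_reg_r rho); [lra|]. field_simplify; nra. }
  assert (Habs : -1 <= a <= 1).
  { rewrite Ha. split; [|nra].
    assert (c * b <= 1 + b) by nra. nra. }
  assert (HD : 0 < (1 - w * a)^2).
  { assert (w * a < 1).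
    { destruct (Rle_dec 0 a).
      - assert (0 <= (1 - w) * a) by (apply Rmult_le_pos; lra). nra.
      - assert (0 <= (1 + w) * (- a)) by (apply Rmult_le_pos; lra). nra. }
    nra. }
  set (D := (1 - w * a)^2) in *.
  set (q := fun s => c * b^2 + c * (1 - s)^2 / (c - 1) + a^2).
  assert (Hq : forall s, 0 < q s).
  { intro s. unfold q. assert (0 <= c * (1 - s)^2 / (c - 1)).
    { apply Rmult_le_pos; [apply Rmult_le_pos; [lra| apply pow2_ge_0]| left; apply Rinv_0_lt_compat; lra]. }
    lra. }
  assert (Hext : forall s, a^2 / D * / q s - a^2 * w^2 / D = J_G C rho hL s hF).
  { intro s. unfold J_G, J_notG, Qf. fold c a b w. fold D.
    change (c * b ^ 2 + c * (1 - s) ^ 2 / (c - 1) + a ^ 2) with (q s).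
    field. split; [lra|]. specialize (Hq s); lra. }
  assert (Hder : is_derive (fun s => J_G C rho hL s hF) hS
     (a^2 / D * (2 * c * (1 - hS) / (c - 1)) / (q hS)^2)).
  { apply (is_derive_ext (fun s => a^2 / D * / q s - a^2 * w^2 / D)); [exact Hext|].
    unfold q. auto_derive.
    - specialize (Hq hS). unfold q in Hq. lra.
    - specialize (Hq hS). unfold q in Hq. field. split; [lra|]. split; [lra|].
      assert (0 < (c-1) * (c * b ^ 2 + c * (1 - hS) ^ 2 / (c - 1) + a ^ 2)) by (apply Rmult_lt_0_compat; lra).
      replace (c * b ^ 2 * (c - 1) + c * (1 - hS) ^ 2 + a ^ 2 * (c - 1)) with ((c-1) * (c * b ^ 2 + c * (1 - hS) ^ 2 / (c - 1) + a ^ 2)) by (field; lra).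
      lra. }
  split; [eexists; exact Hder|].
  erewrite is_derive_unique by exact Hder.
  specialize (Hq hS).
  apply Rmult_le_pos.
  - apply Rmult_le_pos.
    + apply Rmult_le_pos; [nra|left; apply Rinv_0_lt_compat; lra].
    + apply Rmult_le_pos; [nra|left; apply Rinv_0_lt_compat; lra].
  - left; apply Rinv_0_lt_compat; nra.
Qed.
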